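(* Let the spot price $\pi$ have CDF $F_{\pi}$ and monotonically decreasing density $f_{\pi}$ on $[\underline{\pi},\bar{\pi}]$ with $0\le\underline{\pi}<\bar{\pi}$, and let $t_k,t_e,t_s,t_r>0$ with $t_s<t_e\le 2t_s$. Let $q_1^*$ be the optimal value of $q$ in problem (P1): minimize $\Phi_1(p,q)=q\,t_e\bar{\pi}+\frac{(1-q)t_e\int_{\underline{\pi}}^{p}x f_{\pi}(x)\,dx}{F_{\pi}(p)}$ subject to $(1-q)t_e\le \frac{t_k}{1-F_{\pi}(p)}$, $t_k\left(\frac{1}{F_{\pi}(p)}-1\right)+(1-q)t_e\le t_s$, $q t_e\le t_s$, $\underline{\pi}\le p\le\bar{\pi}$, $0\le q\le 1$. Let $q_3^*$ be the optimal value of $q$ in problem (P3): minimize $\Phi_3(p,q)=q\,t_e\bar{\pi}+\frac{(1-q)t_e}{1-\frac{t_r}{t_k}(1-F_{\pi}(p))}\cdot\frac{\int_{\underline{\pi}}^{p}x f_{\pi}(x)\,dx}{F_{\pi}(p)}$ subject to $q t_e\le t_s$, $\underline{\pi}\le p\le\bar{\pi}$, $0\le q\le 1$, $\frac{(1-q)t_e}{\left(1-\frac{t_r}{t_k}(1-F_{\pi}(p))\right)F_{\pi}(p)}\le t_s$, $t_r<\frac{t_k}{2(1-F_{\pi}(p))}$. Then $|q_1^*-q_3^*|\le \frac{t_k}{t_e}$.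
   Context: (P1) models a one-time spot request with expected deadline guarantee; (P3) models a persistent spot request with recovery time $t_r$ per resumption. In both, $q$ is the fraction of a job of execution time $t_e$ and deadline $t_s$ run on an on-demand instance at price $\bar{\pi}$, $p$ is the spot bid, and spot prices in slots of length $t_k$ are i.i.d. with CDF $F_{\pi}$ and monotonically decreasing density $f_{\pi}$ on $[\underline{\pi},\bar{\pi}]$. *)

(* Defs.v *)
From Stdlib Require Import Reals.
From Coquelicot Require Import Coquelicot.
Open Scope R_scope.

Definition decreasing_density (f : R -> R) (lo hi : R) : Prop :=
  (forall x, lo <= x <= hi -> 0 <= f x) /\
  (forall x y, lo <= x -> x <= y -> y <= hi -> f y <= f x) /\
  ex_RInt f lo hi /\
  RInt f lo hi = 1.

Definition cdf (f : R -> R) (lo p : R) : R := RInt f lo p.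

Definition partial_mean (f : R -> R) (lo p : R) : R := RInt (fun x => x * f x) lo p.

Definition Phi1 (f : R -> R) (lo hi te : R) (p q : R) : R :=
  q * te * hi + (1 - q) * te * partial_mean f lo p / cdf f lo p.

(* Constraints of (P1).  Conventions: tk/(1-F) = +oo when F = 1 (constraint
   vacuous); 1/F = +oo when F = 0 (constraint violated), hence 0 < F. *)
Definition P1_feasible (f : R -> R) (lo hi tk te ts : R) (p q : R) : Prop :=
  (cdf f lo p < 1 -> (1 - q) * te <= tk / (1 - cdf f lo p)) /\
  0 < cdf f lo p /\
  tk * (1 / cdf f lo p - 1) + (1 - q) * te <= ts /\
  q * te <= ts /\
  lo <= p <= hi /\
  0 <= q <= 1.

Definition P1_optimal (f : R -> R) (lo hi tk te ts : R) (p q : R) : Prop :=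
  P1_feasible f lo hi tk te ts p q /\
  forall p' q', P1_feasible f lo hi tk te ts p' q' ->
    Phi1 f lo hi te p q <= Phi1 f lo hi te p' q'.

Definition Phi3 (f : R -> R) (lo hi tk te tr : R) (p q : R) : R :=
  q * te * hi
  + (1 - q) * te / (1 - tr / tk * (1 - cdf f lo p))
    * (partial_mean f lo p / cdf f lo p).

(* Constraints of (P3).  Conventions: tk/(2(1-F)) = +oo when F = 1;
   division by F requires 0 < F. *)
Definition P3_feasible (f : R -> R) (lo hi tk te ts tr : R) (p q : R) : Prop :=
  q * te <= ts /\
  lo <= p <= hi /\
  0 <= q <= 1 /\
  0 < cdf f lo p /\
  (1 - q) * te / ((1 - tr / tk * (1 - cdf f lo p)) * cdf f lo p) <= ts /\
  (cdf f lo p < 1 -> tr < tk / (2 * (1 - cdf f lo p))).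

Definition P3_optimal (f : R -> R) (lo hi tk te ts tr : R) (p q : R) : Prop :=
  P3_feasible f lo hi tk te ts tr p q /\
  forall p' q', P3_feasible f lo hi tk te ts tr p' q' ->
    Phi3 f lo hi tk te tr p q <= Phi3 f lo hi tk te tr p' q'.

(* Main.v *)
Require Import Defs.
From Stdlib Require Import Reals Lra Lia Psatz ClassicalEpsilon ZArith.
From Coquelicot Require Import Coquelicot.
Open Scope R_scope.

Lemma unif_approx (h : R -> R) (a b : R) : a <= b ->
  (forall eps : posreal, exists g, ex_RInt g a b /\
     forall t, a <= t <= b -> Rabs (h t - g t) <= eps) ->
  ex_RInt h a b.
Proof.
  intros Hab H. apply ex_RInt_Reals_1. intro eps.
  assert (He1 : 0 < eps / 2 / (b - a + 1)).
  { apply Rdiv_lt_0_compat; [destruct eps; simpl; lra | lra]. }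
  destruct (constructive_indefinite_description _ (H (mkposreal _ He1))) as [g [Hg Hhg]].
  simpl in Hhg.
  assert (He2 : 0 < eps / 2) by (destruct eps; simpl; lra).
  destruct (ex_RInt_Reals_0 g a b Hg (mkposreal _ He2)) as [phi [psi [H1 H2]]].
  simpl in H2.
  exists phi.
  exists (mkStepFun (StepFun_P28 1 psi (mkStepFun (StepFun_P4 a b (eps / 2 / (b - a + 1)))))).
  split.
  - intros t Ht. simpl. unfold fct_cte.
    rewrite Rmin_left in Ht by lra. rewrite Rmax_right in Ht by lra.
    specialize (H1 t). rewrite Rmin_left, Rmax_right in H1 by lra.
    specialize (H1 Ht). specialize (Hhg t Ht).
    replace (h t - phi t) with ((h t - g t) + (g t - phi t)) by ring.
    eapply Rle_trans; [apply Rabs_triang|]. lra.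
  - rewrite StepFun_P30, StepFun_P18.
    eapply Rle_lt_trans; [apply Rabs_triang|].
    rewrite Rmult_1_l, (Rabs_right (_ * (b - a))).
    2:{ apply Rle_ge, Rmult_le_pos; lra. }
    assert (eps / 2 / (b - a + 1) * (b - a) <= eps / 2).
    { unfold Rdiv. rewrite Rmult_assoc.
      assert (/ (b - a + 1) * (b - a) <= 1).
      { apply (Rmult_le_reg_l (b - a + 1)); [lra|].
        rewrite <- Rmult_assoc, Rinv_r by lra. lra. }
      assert (0 < eps * / 2) by (destruct eps; simpl; lra).
      nra. }
    lra.
Qed.
Fixpoint stp (a d : R) (n : nat) (x : R) : R :=
  match n with
  | O => a
  | S m => if Rle_dec (a + INR (S m) * d) x then a + INR (S m) * d else stp a d m x
  end.

Lemma stp_S a d m x : stp a d (S m) x =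
  if Rle_dec (a + INR (S m) * d) x then a + INR (S m) * d else stp a d m x.
Proof. reflexivity. Qed.

Lemma stp_top a d n x : a + INR n * d <= x -> stp a d n x = a + INR n * d.
Proof.
  destruct n as [|m]; intros H.
  - simpl. ring.
  - rewrite stp_S.
  destruct (Rle_dec _ x); [reflexivity | contradiction].
Qed.

Lemma stp_piece a d (Hd : 0 < d) n : forall k x, (k < n)%nat ->
  a + INR k * d <= x < a + INR (S k) * d -> stp a d n x = a + INR k * d.
Proof.
  induction n as [|n IH]; intros k x Hk Hx; [lia|].
  rewrite stp_S. destruct (Rle_dec (a + INR (S n) * d) x) as [Hle|Hnle].
  - exfalso. assert (INR (S k) <= INR (S n)) by (apply le_INR; lia).
    assert (INR (S k) * d <= INR (S n) * d) by (apply Rmult_le_compat_r; lra). lra.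
  - destruct (Nat.eq_dec k n) as [->|Hne].
    + apply stp_top. lra.
    + apply IH; [lia|lra].
Qed.

Lemma stp_close a d (Hd : 0 < d) n : forall x, a <= x <= a + INR n * d ->
  Rabs (x - stp a d n x) <= d.
Proof.
  induction n as [|n IH]; intros x Hx.
  - simpl in Hx. simpl. replace (x - a) with 0 by lra. rewrite Rabs_R0. lra.
  - rewrite stp_S. destruct (Rle_dec (a + INR (S n) * d) x) as [Hle|Hnle].
    + replace (x - (a + INR (S n) * d)) with 0 by lra. rewrite Rabs_R0. lra.
    + rewrite S_INR in Hnle, Hx.
      destruct (Rle_dec x (a + INR n * d)) as [H1|H1].
      * apply IH. lra.
      * rewrite stp_top by lra. rewrite Rabs_right; lra.
Qed.

Lemma ex_RInt_xf (f : R -> R) (a b : R) : a <= b -> ex_RInt f a b ->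
  ex_RInt (fun x => x * f x) a b.
Proof.
  intros Hab Hf.
  destruct (Req_dec a b) as [<-|Hne]; [apply ex_RInt_point|].
  assert (Hlt : a < b) by lra.
  destruct (ex_RInt_ub f a b Hf) as [M HM].
  rewrite Rmin_left, Rmax_right in HM by lra.
  assert (HM' : forall t, a <= t <= b -> Rabs (f t) <= Rabs M).
  { intros t Ht. specialize (HM t Ht). unfold norm in HM; simpl in HM.
    unfold abs in HM; simpl in HM. pose proof (Rle_abs M). lra. }
  apply unif_approx; [lra|]. intro eps.
  destruct (archimed ((b - a) * (Rabs M + 1) / eps)) as [Hup _].
  set (z := up ((b - a) * (Rabs M + 1) / eps)) in *.
  assert (Hpos : 0 < (b - a) * (Rabs M + 1) / eps).
  { apply Rdiv_lt_0_compat; [|destruct eps; simpl; lra].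
    pose proof (Rabs_pos M). apply Rmult_lt_0_compat; lra. }
  assert (Hz : (0 < z)%Z) by (apply lt_IZR; lra).
  set (N := Z.to_nat z).
  assert (HN : INR N = IZR z) by (unfold N; rewrite INR_IZR_INZ, Z2Nat.id by lia; reflexivity).
  assert (HN0 : 0 < INR N) by lra.
  set (d := (b - a) / INR N).
  assert (Hd : 0 < d) by (apply Rdiv_lt_0_compat; lra).
  assert (HNd : a + INR N * d = b) by (unfold d; field; lra).
  assert (Hdef : d * INR N = b - a) by (unfold d; field; lra).
  clearbody N d.
  exists (fun x => stp a d N x * f x). split.
  - assert (Hk : forall k, (k <= N)%nat -> ex_RInt (fun x => stp a d N x * f x) a (a + INR k * d)).
    { induction k as [|k IH]; intros Hk.
      - change (INR 0) with 0. replace (a + 0 * d) with a by ring. apply ex_RInt_point.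
      - assert (HkN : INR (S k) <= INR N) by (apply le_INR; lia).
        rewrite S_INR in HkN.
        assert (0 <= INR k) by apply pos_INR.
        assert (0 <= INR k * d) by (apply Rmult_le_pos; lra).
        assert ((INR k + 1) * d <= INR N * d) by (apply Rmult_le_compat_r; lra).
        rewrite S_INR.
        apply ex_RInt_Chasles_0 with (a + INR k * d).
        + lra.
        + apply IH; lia.
        + apply ex_RInt_ext with (fun x => scal (a + INR k * d) (f x)).
          * intros x Hx. rewrite Rmin_left, Rmax_right in Hx by (lra).
            rewrite (stp_piece a d Hd N k x). 3: rewrite S_INR; lra. 2: lia.
            unfold scal; simpl; unfold mult; simpl. reflexivity.
          * apply (ex_RInt_scal f).
            apply (ex_RInt_Chasles_2 f a); [lra|].
            apply (ex_RInt_Chasles_1 f a _ b); [lra|exact Hf]. }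
    rewrite <- HNd. apply Hk. lia.
  - intros t Ht. rewrite <- Rmult_minus_distr_r, Rabs_mult.
    assert (H1 : Rabs (t - stp a d N t) <= d) by (apply stp_close; lra).
    specialize (HM' t Ht).
    assert (d * (Rabs M + 1) <= eps).
    { apply (Rmult_le_reg_l (INR N)); [lra|].
      replace (INR N * (d * (Rabs M + 1))) with ((b - a) * (Rabs M + 1)) by (rewrite <- Hdef; ring).
      assert (Heps : 0 < eps) by (destruct eps; auto).
      replace ((b - a) * (Rabs M + 1)) with (((b - a) * (Rabs M + 1) / eps) * eps) by (field; lra).
      apply Rmult_le_compat_r; lra. }
    apply Rle_trans with (d * Rabs M); [|pose proof (Rabs_pos M); lra].
    apply Rmult_le_compat; auto using Rabs_pos.
Qed.

Lemma is_RInt_affine (al be u v : R) :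
  is_RInt (fun x => al * (x - be)) u v (al * ((v - be)^2 - (u - be)^2) / 2).
Proof.
  replace (al * ((v - be)^2 - (u - be)^2) / 2) with
    (minus ((fun x => al * (x - be)^2 / 2) v) ((fun x => al * (x - be)^2 / 2) u)).
  2:{ unfold minus, plus, opp; simpl. field. }
  apply (is_RInt_derive (fun x => al * (x - be)^2 / 2) (fun x => al * (x - be))).
  - intros x _. auto_derive; [auto|]. field.
  - intros x _. apply (ex_derive_continuous (fun x => al * (x - be))). auto_derive; auto.
Qed.

Lemma RInt_affine (al be u v : R) :
  RInt (fun x => al * (x - be)) u v = al * ((v - be)^2 - (u - be)^2) / 2.
Proof. apply is_RInt_unique, is_RInt_affine. Qed.

Lemma ex_RInt_affine (al be u v : R) : ex_RInt (fun x => al * (x - be)) u v.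
Proof. eexists. apply is_RInt_affine. Qed.

Lemma RInt_lin2 (g1 g2 : R -> R) (al be : R) (u v : R) :
  ex_RInt g1 u v -> ex_RInt g2 u v ->
  RInt (fun x => al * g1 x + be * g2 x) u v = al * RInt g1 u v + be * RInt g2 u v.
Proof.
  intros H1 H2.
  pose proof (@RInt_plus R_CompleteNormedModule (fun x => scal al (g1 x)) (fun x => scal be (g2 x)) u v
     (ex_RInt_scal g1 u v al H1) (ex_RInt_scal g2 u v be H2)) as E.
  pose proof (@RInt_scal R_CompleteNormedModule g1 u v al H1) as E1.
  pose proof (@RInt_scal R_CompleteNormedModule g2 u v be H2) as E2.
  simpl in E, E1, E2. unfold plus, scal in E, E1, E2; simpl in E, E1, E2.
  unfold mult in E, E1, E2; simpl in E, E1, E2.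
  rewrite E. f_equal; assumption.
Qed.

Lemma ex_RInt_lin2 (g1 g2 : R -> R) (al be : R) (u v : R) :
  ex_RInt g1 u v -> ex_RInt g2 u v ->
  ex_RInt (fun x => al * g1 x + be * g2 x) u v.
Proof.
  intros H1 H2.
  pose proof (@ex_RInt_plus R_NormedModule (fun x => scal al (g1 x)) (fun x => scal be (g2 x)) u v
     (ex_RInt_scal g1 u v al H1) (ex_RInt_scal g2 u v be H2)) as E.
  exact E.
Qed.

Lemma Chasles_R (g : R -> R) a b c : ex_RInt g a b -> ex_RInt g b c ->
  RInt g a b + RInt g b c = RInt g a c.
Proof.
  intros H1 H2. pose proof (@RInt_Chasles R_CompleteNormedModule g a b c H1 H2) as E.
  simpl in E. unfold plus in E; simpl in E. exact E.
Qed.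

Lemma dd_ex f lo hi : decreasing_density f lo hi -> forall p q,
  lo <= p -> p <= q -> q <= hi -> ex_RInt f p q.
Proof.
  intros [_ [_ [Hex _]]] p q H1 H2 H3.
  apply (ex_RInt_Chasles_2 f lo); [lra|].
  apply (ex_RInt_Chasles_1 f lo q hi); [lra|exact Hex].
Qed.

Lemma dd_exx f lo hi : lo <= hi -> decreasing_density f lo hi -> forall p q,
  lo <= p -> p <= q -> q <= hi -> ex_RInt (fun x => x * f x) p q.
Proof.
  intros Hlh Hd p q H1 H2 H3.
  assert (Hx := ex_RInt_xf f lo hi Hlh (proj1 (proj2 (proj2 Hd)))).
  apply (ex_RInt_Chasles_2 (fun x => x * f x) lo); [lra|].
  apply (ex_RInt_Chasles_1 (fun x => x * f x) lo q hi); [lra|exact Hx].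
Qed.

Lemma dd_pos f lo hi : decreasing_density f lo hi -> forall p q,
  lo <= p -> p <= q -> q <= hi -> 0 <= RInt f p q.
Proof.
  intros Hd p q H1 H2 H3.
  assert (E : RInt (fun x => 0 * (x - 0)) p q = 0) by (rewrite RInt_affine; simpl; field).
  rewrite <- E.
  apply RInt_le; auto.
  - apply ex_RInt_affine.
  - eapply dd_ex; eauto.
  - intros x Hx. destruct Hd as [Hn _]. rewrite Rmult_0_l. apply Hn. lra.
Qed.

Lemma dd_facts f lo hi (Hlo : 0 <= lo) (Hlh : lo < hi) (Hd : decreasing_density f lo hi)
  p (Hp1 : lo <= p) (Hp2 : p <= hi) :
  RInt f lo p + RInt f p hi = 1 /\
  RInt (fun x => x * f x) lo p + RInt (fun x => x * f x) p hi = partial_mean f lo hi /\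
  0 <= RInt f lo p /\ 0 <= RInt f p hi /\ 0 <= f p /\
  0 <= (p + hi) / 2 * RInt f p hi - RInt (fun x => x * f x) p hi /\
  f p * (p - lo) ^ 2 / 2 <= RInt (fun x => x * f x) lo p - lo * RInt f lo p /\
  RInt f p hi <= (hi - p) * f p.
Proof.
  pose proof Hd as [Hn [Hdec [Hex H1]]].
  assert (Ef1 := dd_ex f lo hi Hd lo p ltac:(lra) ltac:(lra) ltac:(lra)).
  assert (Ef2 := dd_ex f lo hi Hd p hi ltac:(lra) ltac:(lra) ltac:(lra)).
  assert (Ex1 := dd_exx f lo hi ltac:(lra) Hd lo p ltac:(lra) ltac:(lra) ltac:(lra)).
  assert (Ex2 := dd_exx f lo hi ltac:(lra) Hd p hi ltac:(lra) ltac:(lra) ltac:(lra)).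
  split; [rewrite Chasles_R; auto|].
  split; [unfold partial_mean; rewrite Chasles_R; auto|].
  split; [apply (dd_pos f lo hi Hd); lra|].
  split; [apply (dd_pos f lo hi Hd); lra|].
  split; [apply Hn; lra|].
  split.
  { set (c := (p + hi) / 2).
    assert (E : RInt (fun x => (- f c) * (x - c)) p hi = 0).
    { rewrite RInt_affine. unfold c. simpl. field. }
    assert (L : RInt (fun x => (- f c) * (x - c)) p hi <=
                RInt (fun x => c * f x + (-1) * (x * f x)) p hi).
    { apply RInt_le; auto.
      - apply ex_RInt_affine.
      - apply ex_RInt_lin2; auto.
      - intros x Hx. destruct (Rle_dec x c) as [Hxc|Hxc].
        + assert (f c <= f x) by (apply Hdec; unfold c in *; lra).
          nra.
        + assert (f x <= f c) by (apply Hdec; unfold c in *; lra).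
          nra. }
    rewrite RInt_lin2 in L by auto. lra. }
  split.
  { assert (E : RInt (fun x => f p * (x - lo)) lo p = f p * (p - lo) ^ 2 / 2).
    { rewrite RInt_affine. simpl. field. }
    assert (L : RInt (fun x => f p * (x - lo)) lo p <=
                RInt (fun x => 1 * (x * f x) + (- lo) * f x) lo p).
    { apply RInt_le; auto.
      - apply ex_RInt_affine.
      - apply ex_RInt_lin2; auto.
      - intros x Hx.
        assert (f p <= f x) by (apply Hdec; lra).
        nra. }
    rewrite RInt_lin2 in L by auto. lra. }
  { assert (L : RInt f p hi <= RInt (fun _ => f p) p hi).
    { apply RInt_le; auto.
      - apply ex_RInt_const.
      - intros x Hx. apply Hdec; lra. }
    rewrite RInt_const in L. simpl in L. unfold scal in L; simpl in L. unfold mult in L; simpl in L.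
    lra. }
Qed.

Lemma W_pos f lo hi (Hlo : 0 <= lo) (Hlh : lo < hi) (Hd : decreasing_density f lo hi) :
  0 < hi - partial_mean f lo hi.
Proof.
  destruct (dd_facts f lo hi Hlo Hlh Hd lo ltac:(lra) ltac:(lra))
    as [A [B [C [D [E [G [H I]]]]]]].
  rewrite RInt_point in A, B. simpl in A, B. unfold zero in A, B; simpl in A, B.
  assert (K1 : RInt f lo hi = 1) by lra.
  assert (K2 : RInt (fun x => x * f x) lo hi = partial_mean f lo hi) by lra.
  rewrite K1, K2 in G. lra.
Qed.

Lemma key_ineq f lo hi (Hlo : 0 <= lo) (Hlh : lo < hi) (Hd : decreasing_density f lo hi)
  p (Hp1 : lo <= p) (Hp2 : p <= hi) :
  0 <= cdf f lo p <= 1 /\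
  hi * cdf f lo p - partial_mean f lo p <= hi - partial_mean f lo hi /\
  hi * cdf f lo p - partial_mean f lo p <=
    cdf f lo p * (2 - cdf f lo p) * (hi - partial_mean f lo hi).
Proof.
  destruct (dd_facts f lo hi Hlo Hlh Hd p Hp1 Hp2)
    as [A [B [C [D [E [G [H I]]]]]]].
  unfold cdf, partial_mean in *.
  set (F := RInt f lo p) in *. set (Fr := RInt f p hi) in *.
  set (Pp := RInt (fun x => x * f x) lo p) in *.
  set (Pr := RInt (fun x => x * f x) p hi) in *.
  set (PM := RInt (fun x => x * f x) lo hi) in *.
  set (a := f p) in *.
  split; [split; lra|].
  assert (Pr <= hi * Fr) by nra.
  split; [replace F with (1 - Fr) by lra; lra|].
  set (u := Fr). set (d := hi - p). set (L := hi - lo).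
  assert (HX : u * d / 2 <= hi * u - Pr) by (unfold u, d in *; lra).
  assert (HY : a * (L - d) ^ 2 / 2 <= Pp - lo * F) by (unfold L, d; replace (hi - lo - (hi - p)) with (p - lo) by ring; lra).
  assert (Hu : u <= d * a) by (unfold u, d; lra).
  assert (HF : F = 1 - u) by (unfold u; lra).
  assert (HW : hi - PM = (hi * u - Pr) + L * F - (Pp - lo * F)) by (unfold L; rewrite HF; lra).
  assert (HG : hi * F - Pp = (hi - PM) - (hi * u - Pr)) by (rewrite HF; lra).
  rewrite HG, HW.
  set (X := hi * u - Pr) in *. set (Y := Pp - lo * F) in *.
  rewrite HF in *.
  assert (Hu0 : 0 <= u) by (unfold u; lra).
  assert (Hu1 : u <= 1) by lra.
  destruct (Req_dec u 0) as [Hu00|Hu00].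
  { rewrite Hu00 in *. assert (0 <= X) by lra. nra. }
  assert (Hd0 : 0 < d).
  { assert (0 <= d) by (unfold d; lra).
    destruct (Rle_lt_dec d 0); [|lra]. assert (Hd00 : d = 0) by lra.
    rewrite Hd00 in Hu. exfalso. apply Hu00. lra. }
  assert (Ha : u / d <= a) by (apply (Rmult_le_reg_l d); [lra|]; field_simplify; lra).
  assert (HY2 : u * (L - d) ^ 2 / (2 * d) <= Y).
  { apply Rle_trans with (a * (L - d) ^ 2 / 2); [|lra].
    assert (0 <= (L - d) ^ 2) by apply pow2_ge_0.
    replace (u * (L - d) ^ 2 / (2 * d)) with ((u / d) * (L - d) ^ 2 / 2) by (field; lra).
    apply Rmult_le_compat_r; [lra|]. apply Rmult_le_compat_r; lra. }
  assert (Hpoly : 2 * d * u * L * (1 - u) - u ^ 2 * (L - d) ^ 2 <= (1 - u ^ 2) * d ^ 2).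
  { assert (0 <= (d - u * L) ^ 2) by apply pow2_ge_0. nra. }
  assert (Hmain : u ^ 2 * (L * (1 - u) - Y) <= (1 - u ^ 2) * X).
  { apply Rle_trans with (u ^ 2 * (L * (1 - u) - u * (L - d) ^ 2 / (2 * d))).
    { apply Rmult_le_compat_l; [nra|lra]. }
    apply Rle_trans with ((1 - u ^ 2) * (u * d / 2)); [|apply Rmult_le_compat_l; nra].
    apply (Rmult_le_reg_l (2 * d / u)); [apply Rdiv_lt_0_compat; lra|].
    replace (2 * d / u * (u ^ 2 * (L * (1 - u) - u * (L - d) ^ 2 / (2 * d)))) with
      (2 * d * u * L * (1 - u) - u ^ 2 * (L - d) ^ 2) by (field; lra).
    replace (2 * d / u * ((1 - u ^ 2) * (u * d / 2))) with ((1 - u ^ 2) * d ^ 2) by (field; lra).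
    exact Hpoly. }
  nra.
Qed.

Theorem lemma8 (f : R -> R) (lo hi tk te ts tr : R) :
  0 <= lo -> lo < hi ->
  decreasing_density f lo hi ->
  0 < tk -> 0 < te -> 0 < ts -> 0 < tr ->
  ts < te -> te <= 2 * ts ->
  forall p1 q1 p3 q3 : R,
    P1_optimal f lo hi tk te ts p1 q1 ->
    P3_optimal f lo hi tk te ts tr p3 q3 ->
    Rabs (q1 - q3) <= tk / te.
Proof.
  intros Hlo Hlh Hd Htk Hte Hts Htr Hst Hte2 p1 q1 p3 q3 [Fe1 O1] [Fe3 O3].
  assert (Fh : cdf f lo hi = 1) by (destruct Hd as [_ [_ [_ E]]]; exact E).
  assert (HW := W_pos f lo hi Hlo Hlh Hd).
  set (W := hi - partial_mean f lo hi) in *.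
  set (q0 := 1 - ts / te).
  assert (Hq0 : q0 * te = te - ts) by (unfold q0; field; lra).
  assert (Hs0 : (1 - q0) * te = ts) by (unfold q0; field; lra).
  assert (Hq0r : 0 <= q0 <= 1).
  { split; [|unfold q0; assert (0 < ts / te) by (apply Rdiv_lt_0_compat; lra); lra].
    apply (Rmult_le_reg_r te); lra. }
  assert (F3h : P3_feasible f lo hi tk te ts tr hi q0).
  { unfold P3_feasible. rewrite Fh.
    split; [lra|]. split; [lra|]. split; [exact Hq0r|]. split; [lra|]. split.
    - replace ((1 - tr / tk * (1 - 1)) * 1) with 1 by ring. rewrite Hs0. lra.
    - intros; lra. }
  specialize (O3 hi q0 F3h).
  unfold Phi3 in O3. rewrite Fh in O3.
  replace (q0 * te * hi + (1 - q0) * te / (1 - tr / tk * (1 - 1)) * (partial_mean f lo hi / 1))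
    with (te * hi - ts * W) in O3 by (unfold W; rewrite <- Hs0; field; lra).
  destruct Fe3 as [C31 [C32 [C33 [C34 [C35 C36]]]]].
  destruct (key_ineq f lo hi Hlo Hlh Hd p3 (proj1 C32) (proj2 C32)) as [[F3a F3b] [K3 _]].
  fold W in K3.
  set (F3 := cdf f lo p3) in *. set (P3 := partial_mean f lo p3) in *.
  set (r := tr / tk) in *.
  assert (Hr : 0 < r) by (unfold r; apply Rdiv_lt_0_compat; lra).
  set (g := 1 - r * (1 - F3)) in *.
  assert (Hg : 0 < g).
  { destruct (Rlt_dec F3 1) as [Hl|Hl].
    - specialize (C36 Hl).
      assert (r * (2 * (1 - F3)) < 1).
      { unfold r. apply (Rmult_lt_reg_r tk); [lra|].
        replace (tr / tk * (2 * (1 - F3)) * tk) with (tr * (2 * (1 - F3))) by (field; lra).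
        apply (Rmult_lt_compat_r (2 * (1 - F3))) in C36; [|lra].
        replace (tk / (2 * (1 - F3)) * (2 * (1 - F3))) with tk in C36 by (field; lra). lra. }
      unfold g. lra.
    - assert (F3 = 1) by lra. unfold g. rewrite H. lra. }
  set (s3 := 1 - q3) in *.
  set (t := s3 * te / (g * F3)) in *.
  assert (HgF : 0 < g * F3) by (apply Rmult_lt_0_compat; lra).
  assert (Ht0 : 0 <= t) by (unfold t, s3; apply Rdiv_le_0_compat; nra).
  set (K := g * F3 * hi - P3).
  assert (HPhi3 : q3 * te * hi + s3 * te / g * (P3 / F3) = te * hi - t * K).
  { unfold t, K, s3. field. split; lra. }
  rewrite HPhi3 in O3.
  assert (HK1 : K = (hi * F3 - P3) - hi * r * F3 * (1 - F3)) by (unfold K, g; ring).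
  assert (Hhi : 0 < hi) by lra.
  assert (HK2 : 0 <= hi * r * F3 * (1 - F3)).
  { apply Rmult_le_pos; [|lra]. apply Rmult_le_pos; [|lra]. apply Rmult_le_pos; lra. }
  assert (HtK : ts * W <= t * K) by lra.
  assert (HKpos : 0 < K).
  { destruct (Rle_lt_dec K 0) as [HK|HK]; [|exact HK].
    assert (t * K <= 0) by (apply Rmult_le_0_l; lra).
    assert (0 < ts * W) by (apply Rmult_lt_0_compat; lra). lra. }
  assert (HWK : W <= K).
  { assert (t * K <= ts * K) by (apply Rmult_le_compat_r; lra).
    apply (Rmult_le_reg_l ts); lra. }
  assert (HF31 : F3 = 1).
  { assert (hi * r * F3 * (1 - F3) <= 0) by lra.
    assert (HP : 0 < hi * r * F3) by (apply Rmult_lt_0_compat; [apply Rmult_lt_0_compat|]; lra).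
    destruct (Rlt_dec F3 1) as [Hl|Hl]; [|lra].
    assert (0 < hi * r * F3 * (1 - F3)) by (apply Rmult_lt_0_compat; lra). lra. }
  assert (Hg1 : g = 1) by (unfold g; rewrite HF31; ring).
  assert (HKW : K = W) by (rewrite HF31 in HK1, K3; lra).
  assert (Htts : t = ts).
  { rewrite HKW in HtK. assert (ts <= t) by (apply (Rmult_le_reg_r W); lra).
    assert (t <= ts).
    { exact C35. }
    lra. }
  assert (Hq3 : q3 * te = te - ts).
  { unfold t in Htts. rewrite Hg1, HF31 in Htts.
    replace (s3 * te / (1 * 1)) with (s3 * te) in Htts by field.
    unfold s3 in Htts. lra. }
  assert (F1h : P1_feasible f lo hi tk te ts hi q0).
  { unfold P1_feasible. rewrite Fh.
    split; [intros; lra|]. split; [lra|].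
    split; [replace (tk * (1 / 1 - 1)) with 0 by field; lra|].
    split; [lra|]. split; [lra|exact Hq0r]. }
  specialize (O1 hi q0 F1h).
  unfold Phi1 in O1. rewrite Fh in O1.
  replace (q0 * te * hi + (1 - q0) * te * partial_mean f lo hi / 1)
    with (te * hi - ts * W) in O1 by (unfold W; rewrite <- Hs0; field; lra).
  destruct Fe1 as [C11 [C12 [C13 [C14 [C15 C16]]]]].
  destruct (key_ineq f lo hi Hlo Hlh Hd p1 (proj1 C15) (proj2 C15)) as [[F1a F1b] [_ K1]].
  fold W in K1.
  set (F1 := cdf f lo p1) in *. set (P1 := partial_mean f lo p1) in *.
  set (s1 := 1 - q1) in *.
  assert (HPhi1 : q1 * te * hi + s1 * te * P1 / F1 = te * hi - s1 * te * (hi * F1 - P1) / F1).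
  { unfold s1. field. lra. }
  rewrite HPhi1 in O1.
  assert (Hs1pos : te - ts <= s1 * te) by (unfold s1; lra).
  assert (G1 : ts * W <= s1 * te * (hi * F1 - P1) / F1) by lra.
  assert (G2 : ts <= s1 * te * (2 - F1)).
  { assert (s1 * te * (hi * F1 - P1) / F1 <= s1 * te * (2 - F1) * W).
    { apply (Rmult_le_reg_r F1); [lra|].
      replace (s1 * te * (hi * F1 - P1) / F1 * F1) with (s1 * te * (hi * F1 - P1)) by (field; lra).
      assert (0 <= s1 * te) by lra.
      replace (s1 * te * (2 - F1) * W * F1) with (s1 * te * (F1 * (2 - F1) * W)) by ring.
      apply Rmult_le_compat_l; lra. }
    apply (Rmult_le_reg_r W); lra. }
  assert (Hlow : s1 * te <= ts).
  { assert (0 <= tk * (1 / F1 - 1)).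
    { apply Rmult_le_pos; [lra|].
      assert (1 <= 1 / F1).
      { apply (Rmult_le_reg_r F1); [lra|]. replace (1 / F1 * F1) with 1 by (field; lra). lra. }
      lra. }
    lra. }
  assert (Hup : ts - tk <= s1 * te).
  { destruct (Rle_lt_dec (ts - tk) (s1 * te)) as [H|H]; [exact H|exfalso].
    destruct (Rlt_dec F1 1) as [Hl|Hl].
    - specialize (C11 Hl). fold s1 in C11.
      assert (s1 * te * (1 - F1) <= tk).
      { apply (Rmult_le_compat_r (1 - F1)) in C11; [|lra].
        replace (tk / (1 - F1) * (1 - F1)) with tk in C11 by (field; lra). exact C11. }
      assert (s1 * te * (2 - F1) = s1 * te + s1 * te * (1 - F1)) by ring.
      lra.
    - assert (F1 = 1) by lra.
      assert (s1 * te * (2 - F1) = s1 * te) by (rewrite H0; ring). lra. }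
  assert (Hq1 : te - ts <= q1 * te <= te - ts + tk) by (unfold s1 in *; split; lra).
  assert (E : q1 - q3 = (q1 * te - q3 * te) / te) by (field; lra).
  rewrite E, Rabs_div by lra. rewrite (Rabs_right te) by lra.
  apply Rmult_le_compat_r; [left; apply Rinv_0_lt_compat; lra|].
  rewrite Rabs_right by lra. lra.
Qed.
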